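(* Let $\ell\le d\le n/2$ and suppose $d$ is known in advance to the algorithm. Any adaptive randomized group testing algorithm that, for every defective set $I\subseteq[n]$ with $|I|=d$, with probability at least $2/3$ detects $\ell$ defective items must make (in the worst case) at least $\ell\log(n/d)-1$ tests.
   Context: Group testing: items $X=[n]$, unknown defective set $I\subseteq X$ with $d=|I|$. A test $Q\subseteq X$ has answer $1$ if $Q\cap I\neq\emptyset$ and $0$ otherwise; the algorithm accesses $I$ only through tests, and in an adaptive algorithm tests may depend on previous answers. ''Detects $\ell$ defective items'' means it outputs $L\subseteq I$ with $|L|=\ell$. ''$d$ is known in advance'' means the algorithm is given an integer $D$ with $d/4\le D\le 4d$ (in particular, the bound applies even when $d$ is given exactly). Logarithms are base 2. *)

(* Defs.v *)
From HB Require Import structures.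
From mathcomp Require Import all_boot all_order all_algebra.
From mathcomp Require Import all_classical all_reals all_analysis.
Set Implicit Arguments. Unset Strict Implicit. Unset Printing Implicit Defensive.
Import Order.TTheory GRing.Theory Num.Theory.
Local Open Scope ring_scope.

(* A deterministic adaptive group-testing algorithm on items 'I_n is a binary
   decision tree: an internal node asks the test Q (answer 1 iff Q meets the
   defective set) and continues in the 0-subtree or the 1-subtree; a leaf
   outputs a set L. Since d is fixed, the algorithm may depend on d freely
   ("d known in advance", even exactly). *)
Inductive gtree (n : nat) : Type :=
| GLeaf of {set 'I_n}
| GNode of {set 'I_n} & gtree n & gtree n.

Arguments GLeaf {n}.
Arguments GNode {n}.

Definition test_answer (n : nat) (Q I : {set 'I_n}) : bool := Q :&: I != finset.set0.

Fixpoint gt_output (n : nat) (t : gtree n) (I : {set 'I_n}) : {set 'I_n} :=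
  match t with
  | GLeaf L => L
  | GNode Q t0 t1 => if test_answer Q I then gt_output t1 I else gt_output t0 I
  end.

Fixpoint gt_tests (n : nat) (t : gtree n) (I : {set 'I_n}) : nat :=
  match t with
  | GLeaf _ => 0%N
  | GNode Q t0 t1 =>
      (if test_answer Q I then gt_tests t1 I else gt_tests t0 I).+1
  end.

Definition detects (n l : nat) (I L : {set 'I_n}) : bool :=
  (L \subset I) && (#|L| == l).

(* A randomized adaptive algorithm: a finitely supported probability
   distribution over deterministic decision trees: k outcomes of the random
   coins, outcome i having probability ra_w i and running tree ra_t i.
   (Any distribution over algorithms with bounded worst-case number of tests
   can be pushed forward to the finite set of such trees, so finite support
   is no loss of generality.) *)
Record rand_alg (R : realType) (n : nat) := RandAlg {
  ra_k : nat;
  ra_w : 'I_ra_k -> R;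
  ra_t : 'I_ra_k -> gtree n }.
Arguments ra_k {R n}.
Arguments ra_w {R n}.
Arguments ra_t {R n}.

Definition is_distribution (R : realType) (n : nat) (A : rand_alg R n) : Prop :=
  (forall i, 0 <= ra_w A i) /\ \sum_(i < ra_k A) ra_w A i = 1.

Definition success_prob (R : realType) (n l : nat) (A : rand_alg R n)
    (I : {set 'I_n}) : R :=
  \sum_(i < ra_k A | detects l I (gt_output (ra_t A i) I)) ra_w A i.

Definition log2 (R : realType) (x : R) : R := ln x / ln 2.

(* Main.v *)
Require Import Defs.
From HB Require Import structures.
From mathcomp Require Import all_boot all_order all_algebra.
From mathcomp Require Import all_classical all_reals all_analysis.
From mathcomp Require Import ring lra zify.
Import Order.TTheory GRing.Theory Num.Theory.
Local Open Scope ring_scope.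

Lemma binlem (l : nat) : forall n d x y : nat, (l <= d)%N -> (d <= n)%N ->
  (x * d <= y * n)%N ->
  ('C(n - l, d - l) * x ^ l <= 'C(n, d) * y ^ l)%N.
Proof.
elim: l => [|l IH] n d x y hl hd hxy; first by rewrite !subn0 !expn0 !muln1.
case: d hl hd hxy => [//|d] hl hd hxy.
case: n hd hxy => [//|n] hd hxy.
rewrite !subSS.
have hd' : (d <= n)%N by [].
have hxy' : (x * d <= y * n)%N.
  have h1 : (x * d * d.+1 <= y * n * d.+1)%N by nia.
  by rewrite leq_pmul2r in h1.
have h := IH n d x y hl hd' hxy'.
rewrite -(leq_pmul2r (ltn0Sn d)).
have e := mul_bin_diag n.+1 d. rewrite /= in e.
set C1 := 'C(n - l, d - l) in h *.
set C2 := 'C(n, d) in h e *.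
set C3 := 'C(n.+1, d.+1) in e *.
rewrite !expnS.
set X := (x ^ l)%N in h *. set Y := (y ^ l)%N in h *.
have h2 : (C1 * X * (x * d.+1) <= C2 * Y * (x * d.+1))%N by rewrite leq_mul2r h orbT.
have h3 : (C2 * Y * (x * d.+1) <= C2 * Y * (y * n.+1))%N by rewrite leq_mul2l hxy orbT.
have e2 : (C3 * (y * Y) * d.+1 = C2 * Y * (y * n.+1))%N.
  rewrite mulnC mulnA -e. ring.
rewrite e2. apply: (leq_trans _ h3). apply: (leq_trans _ h2).
apply: eq_leq; ring.
Qed.

Lemma leaf_count n d l (L : {set 'I_n}) (P : pred {set 'I_n}) :
  (forall I, P I -> #|I| = d) ->
  (\sum_(I | P I) (detects l I L : nat) <= 'C(n - l, d - l))%N.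
Proof.
move=> HP.
case hL: (#|L| == l); last first.
  by rewrite big1 // => I _; rewrite /detects hL andbF.
move/eqP: hL => hL.
apply: (@leq_trans (\sum_(I : {set 'I_n}) ((L \subset I) && (#|I| == d) : nat))%N).
  rewrite big_mkcond /=; apply: leq_sum => I _.
  case: ifP => // PI.
  by rewrite /detects hL eqxx andbT (HP I PI) eqxx andbT.
have -> : (\sum_(I : {set 'I_n}) ((L \subset I) && (#|I| == d) : nat))%N
    = #|[set I : {set 'I_n} | (L \subset I) & (#|I| == d)]|.
  rewrite -sum1_card [RHS]big_mkcond /=; apply: eq_bigr => I _.
  by rewrite inE; case: ifP.
have hinj : {in [set I : {set 'I_n} | (L \subset I) & (#|I| == d)] &,
              injective (fun I => I :\: L)}.
  move=> I1 I2; rewrite !inE => /andP[h1 _] /andP[h2 _] /= e.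
  move/finset.setIidPr: h1 => E1; move/finset.setIidPr: h2 => E2.
  by rewrite -(setID I1 L) -(setID I2 L) E1 E2 e.
rewrite -(card_in_imset hinj).
apply: (@leq_trans #|[set J : {set 'I_n} | J \subset ~: L & #|J| == (d - l)%N]|).
  apply: subset_leq_card; apply/fintype.subsetP => J /imsetP[I]; rewrite inE.
  move=> /andP[h1 h2] ->; rewrite inE; apply/andP; split.
    by apply/fintype.subsetP => x; rewrite !inE => /andP[].
  move/finset.setIidPr: h1 => E1.
  by rewrite cardsD E1 (eqP h2) hL.
rewrite cards_draws.
have -> : #|~: L| = (n - l)%N by have := cardsC L; rewrite card_ord hL; lia.
by [].
Qed.

Lemma tree_count n d l (t : gtree n) : forall (m : nat) (P : pred {set 'I_n}),
  (forall I, P I -> #|I| = d) -> (forall I, P I -> (gt_tests t I <= m)%N) ->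
  (\sum_(I | P I) (detects l I (gt_output t I) : nat) <= 2 ^ m * 'C(n - l, d - l))%N.
Proof.
elim: t => [L|Q t0 IH0 t1 IH1] m P HP HT.
  apply: leq_trans (@leaf_count n d l L P HP) _.
  by rewrite leq_pmull // expn_gt0.
case: m HT => [|m] HT.
  rewrite big1 // => I PI; have := HT I PI; by [].
rewrite (bigID (fun I => test_answer Q I)) /= expnS -mulnA mul2n -addnn.
apply: leq_add.
  have -> : (\sum_(I | P I && test_answer Q I) (detects l I (gt_output (GNode Q t0 t1) I) : nat)
     = \sum_(I | P I && test_answer Q I) (detects l I (gt_output t1 I) : nat))%N.
    by apply: eq_bigr => I /andP[_ h] /=; rewrite h.
  apply: IH1 => I /andP[PI h]; first exact: HP.
  by have := HT I PI; rewrite /= h.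
have -> : (\sum_(I | P I && ~~ test_answer Q I) (detects l I (gt_output (GNode Q t0 t1) I) : nat)
   = \sum_(I | P I && ~~ test_answer Q I) (detects l I (gt_output t0 I) : nat))%N.
  by apply: eq_bigr => I /andP[_ h] /=; rewrite (negbTE h).
apply: IH0 => I /andP[PI h]; first exact: HP.
by have := HT I PI; rewrite /= (negbTE h).
Qed.

Theorem theorem5 (R : realType) (n d l : nat) (A : rand_alg R n) :
  (l <= d)%N -> (2 * d <= n)%N ->
  is_distribution A ->
  (forall I : {set 'I_n}, #|I| = d -> 2 / 3 <= success_prob l A I) ->
  exists I : {set 'I_n}, exists i : 'I_(ra_k A),
    [/\ #|I| = d, 0 < ra_w A i &
        l%:R * log2 (n%:R / d%:R) - 1 <= (gt_tests (ra_t A i) I)%:R :> R].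
Proof.
move=> hld hdn [w0 w1] Hsucc.
have hdn' : (d <= n)%N by lia.
set S := [set I : {set 'I_n} | #|I| == d].
have cardS : #|S| = 'C(n, d) by rewrite /S card_draws card_ord.
have S0 : (0 < #|S|)%N by rewrite cardS bin_gt0.
apply: contrapT => Hno.
set T := l%:R * log2 (n%:R / d%:R) - 1 : R.
have Hlt : forall (I : {set 'I_n}) i, #|I| = d -> 0 < ra_w A i ->
    (gt_tests (ra_t A i) I)%:R < T.
  move=> I i hI hw; rewrite ltNge; apply/negP => hle; apply: Hno.
  by exists I, i; split.
have key : forall i, 0 < ra_w A i ->
   (2 * (\sum_(I in S) (detects l I (gt_output (ra_t A i) I) : nat)) <= #|S|)%N.
  move=> i hw.
  have [I0 I0S hm] := eq_bigmax_cond (fun I => gt_tests (ra_t A i) I) S0.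
  set m := (\max_(I in S) gt_tests (ra_t A i) I)%N in hm *.
  have Hm : forall I, I \in S -> (gt_tests (ra_t A i) I <= m)%N.
    by move=> I hI; apply: (@leq_bigmax_cond _ (fun I => I \in S) (fun I => gt_tests (ra_t A i) I) I hI).
  clearbody m.
  have hmT : m%:R < T.
    rewrite hm; apply: Hlt => //; by move: I0S; rewrite inE => /eqP.
  have HS : forall I, I \in S -> #|I| = d by move=> I; rewrite inE => /eqP.
  have hcnt := @tree_count n d l (ra_t A i) m (fun I => I \in S) HS Hm.
  set cnt := (\sum_(I in S) (detects l I (gt_output (ra_t A i) I) : nat))%N.
  have hl0 : (0 < l)%N.
    rewrite lt0n; apply/negP => /eqP l0.
    move: hmT; rewrite /T l0 mul0r sub0r.
    have : (0 : R) <= m%:R by []. lra.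
  have hd0 : (0 < d)%N by clear -hl0 hld; lia.
  have hn0 : (0 < n)%N by clear -hd0 hdn'; lia.
  have ln2 : 0 < ln (2 : R) by apply: ln_gt0; lra.
  have r0 : 0 < n%:R / d%:R :> R by apply: divr_gt0; rewrite ltr0n.
  have h1 : (m.+1)%:R * ln 2 < l%:R * ln (n%:R / d%:R) :> R.
    rewrite -ltr_pdivlMr // -mulrA.
    move: hmT; rewrite /T /log2 -[m.+1]addn1 natrD.
    set X := l%:R * _; set Y := m%:R.
    move=> h; rewrite ltrBrDr in h; by [].
  have h2 : (2 : R) ^+ m.+1 < (n%:R / d%:R) ^+ l.
    have e1 : ln ((2:R) ^+ m.+1) < ln ((n%:R / d%:R) ^+ l).
      have h20 : (0:R) < 2 by rewrite ltr0n.
      rewrite (lnXn _ h20) (lnXn _ r0) -[ln 2 *+ _]mulr_natl.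
      rewrite -[ln _ *+ l]mulr_natl.
      exact: h1.
    have p1 : (2:R) ^+ m.+1 \in Num.pos by rewrite posrE exprn_gt0.
    have p2 : (n%:R / d%:R : R) ^+ l \in Num.pos by rewrite posrE exprn_gt0.
    by rewrite -(ltr_ln p1 p2).
  have h3 : (2 ^ m.+1 * d ^ l < n ^ l)%N.
    rewrite -(ltr_nat R) natrM !natrX.
    move: h2; rewrite exprMn exprVn ltr_pdivlMr ?exprn_gt0 ?ltr0n //.
  have hb := binlem l n d n d hld hdn' (eq_leq (mulnC n d)).
  set C' := 'C(n - l, d - l) in hcnt hb.
  set D := (d ^ l)%N in h3 hb.
  have D0 : (0 < D)%N by rewrite expn_gt0 hd0.
  rewrite cardS -(leq_pmul2r D0).
  have p1 : (2 * cnt * D <= 2 * (2 ^ m * C') * D)%N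
    by rewrite leq_mul2r leq_mul2l hcnt !orbT.
  have p2 : (2 ^ m.+1 * D * C' <= n ^ l * C')%N
    by rewrite leq_mul2r (ltnW h3) orbT.
  rewrite expnS in p2.
  rewrite mulnC in hb.
  lia.
have lower : #|S|%:R * (2 / 3) <= \sum_(I in S) success_prob l A I.
  rewrite mulr_natl -sumr_const; apply: ler_sum => I; rewrite inE => /eqP.
  exact: Hsucc.
have eqsum : \sum_(I in S) success_prob l A I
    = \sum_i ra_w A i * (\sum_(I in S) (detects l I (gt_output (ra_t A i) I) : nat))%N%:R.
  rewrite /success_prob.
  under eq_bigr => I _ do rewrite big_mkcond /=.
  rewrite exchange_big /=; apply: eq_bigr => i _.
  rewrite natr_sum mulr_sumr; apply: eq_bigr => I _.
  by case: ifP => _ /=; rewrite ?mulr1 ?mulr0.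
have upper : \sum_i ra_w A i * (\sum_(I in S) (detects l I (gt_output (ra_t A i) I) : nat))%N%:R
    <= #|S|%:R / 2.
  apply: le_trans (_ : \sum_i ra_w A i * (#|S|%:R / 2) <= _).
    apply: ler_sum => i _.
    have := w0 i; rewrite le_eqVlt => /orP[/eqP <-|hw]; first by rewrite !mul0r.
    rewrite ler_wpM2l ?(ltW hw) // ler_pdivlMr // -(natrM _ _ 2) ler_nat.
    by have := key i hw; lia.
  by rewrite -mulr_suml w1 mul1r.
have N0 : 0 < #|S|%:R :> R by rewrite ltr0n.
move: lower; rewrite eqsum => lower.
have := le_trans lower upper.
lra.
Qed.
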